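(* Let $0<\delta<2$, $\eta=2\delta-\delta^2$. If $\mu_1<1$ choose $0<\zeta<\frac{4\eta\mu_1}{(1-\mu_1)^2}$; otherwise choose any $\zeta>0$. Set $\gamma=\sqrt{\zeta\eta\mu_1}$, $\alpha=\frac{\eta}{\eta+\gamma}$, and $\omega=1-\frac{\zeta\mu_1^2+2\gamma\mu_1-\zeta\mu_1}{1+\zeta\mu_1^2}$. Let $\{x_k\},\{v_k\}$ be generated by the PASKM method (defined in the context) from $x_0$ with these parameters. Then $\{v_k\},\{x_k\}$ converge and for all $k\ge0$ $$\mathbb{E}\big[d(v_{k+1},P)^2+\zeta\mu_1 d(x_{k+1},P)^2\big]\le\omega^{k+1}\,\mathbb{E}\big[d(v_0,P)^2+\zeta\mu_1 d(x_0,P)^2\big]=(1+\zeta\mu_1)\,\omega^{k+1}d(x_0,P)^2;$$ i.e., PASKM converges linearly with rate $\omega$.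
   Context: Let $A\in\mathbb{R}^{m\times n}$ have rows $a_1^T,\dots,a_m^T$ with $\|a_i\|_2=1$, and $b\in\mathbb{R}^m$; assume $Ax\le b$ is consistent and let $P=\{x:Ax\le b\}$, $\mathcal{P}(x)$ the Euclidean projection onto $P$, $d(x,P)=\|x-\mathcal{P}(x)\|$, $t^+=\max\{t,0\}$. Fix an integer $1\le\beta\le m$. Let $L>0$ be a Hoffman constant ($d(x,P)^2\le L^2\|(Ax-b)^+\|^2$ for all $x$) and $\mu_1=\frac1{mL^2}$. PASKM method (parameters $\beta,\delta,\alpha,\omega,\gamma$): given $x_0$, set $v_0=x_0$. For $k=0,1,\dots$: $y_k=\alpha v_k+(1-\alpha)x_k$; choose $\tau_k\subseteq\{1,\dots,m\}$ with $|\tau_k|=\beta$ uniformly at random, independently; let $i^*_k\in\tau_k$ maximize $(a_i^Ty_k-b_i)^+$; with $r_k=(a_{i^*_k}^Ty_k-b_{i^*_k})^+$ set $x_{k+1}=y_k-\delta r_k a_{i^*_k}$ and $v_{k+1}=\omega v_k+(1-\omega)y_k-\gamma r_k a_{i^*_k}$. $\mathbb{E}$ denotes total expectation. *)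

(* Defs.v *)
From HB Require Import structures.
From mathcomp Require Import all_boot all_order all_algebra.
From mathcomp Require Import all_classical all_reals.
From mathcomp Require Import topology normedtype sequences.
Set Implicit Arguments. Unset Strict Implicit. Unset Printing Implicit Defensive.
Import Order.TTheory GRing.Theory Num.Theory.
Local Open Scope ring_scope.
Local Open Scope classical_set_scope.

Section PASKM.
Variables (R : realType) (m n : nat).

Definition pos (t : R) : R := Num.max t 0.

Definition norm2 (x : 'cV[R]_n) : R := Num.sqrt (\sum_j x j 0 ^+ 2).

Definition polyhedron (A : 'M[R]_(m, n)) (b : 'cV[R]_m) : set 'cV[R]_n :=
  [set x | forall i, (A *m x) i 0 <= b i 0].

Definition distP (A : 'M[R]_(m, n)) (b : 'cV[R]_m) (x : 'cV[R]_n) : R :=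
  inf [set norm2 (x - y) | y in polyhedron A b].

Definition posres2 (A : 'M[R]_(m, n)) (b : 'cV[R]_m) (x : 'cV[R]_n) : R :=
  \sum_i pos ((A *m x - b) i 0) ^+ 2.

Definition arow (A : 'M[R]_(m, n)) (i : 'I_m) : 'cV[R]_n := (row i A)^T.

(* one PASKM step from state (x_k, v_k), given the sampled set tau_k and
   the index selection rule sel (returning i*_k) *)
Definition paskm_step (A : 'M[R]_(m, n)) (b : 'cV[R]_m)
  (delta alpha omega gamma : R)
  (sel : nat -> {set 'I_m} -> 'cV[R]_n -> 'I_m)
  (k : nat) (tau : {set 'I_m}) (st : 'cV[R]_n * 'cV[R]_n)
  : 'cV[R]_n * 'cV[R]_n :=
  let x := st.1 in let v := st.2 in
  let y := alpha *: v + (1 - alpha) *: x in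
  let i := sel k tau y in
  let r := pos ((A *m y - b) i 0) in
  (y - (delta * r) *: arow A i,
   omega *: v + (1 - omega) *: y - (gamma * r) *: arow A i).

Fixpoint paskm_traj (A : 'M[R]_(m, n)) (b : 'cV[R]_m)
  (delta alpha omega gamma : R)
  (sel : nat -> {set 'I_m} -> 'cV[R]_n -> 'I_m)
  (x0 : 'cV[R]_n) (s : nat -> {set 'I_m}) (k : nat)
  : 'cV[R]_n * 'cV[R]_n :=
  match k with
  | 0 => (x0, x0)
  | k'.+1 => paskm_step A b delta alpha omega gamma sel k' (s k')
               (paskm_traj A b delta alpha omega gamma sel x0 s k')
  end.

Definition bsubset (beta : nat) := {tau : {set 'I_m} | #|tau| == beta}.

Definition ext_sample (beta K : nat) (s : {ffun 'I_K -> bsubset beta})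
  (j : nat) : {set 'I_m} :=
  match insub j with Some j' => val (s j') | None => finset.set0 end.

(* total expectation of f(x_K, v_K): tau_0, ..., tau_{K-1} are independent
   and uniform over the beta-subsets, i.e. uniform over the product *)
Definition paskm_E (A : 'M[R]_(m, n)) (b : 'cV[R]_m) (beta : nat)
  (delta alpha omega gamma : R)
  (sel : nat -> {set 'I_m} -> 'cV[R]_n -> 'I_m)
  (x0 : 'cV[R]_n) (K : nat) (f : 'cV[R]_n * 'cV[R]_n -> R) : R :=
  (\sum_(s : {ffun 'I_K -> bsubset beta})
      f (paskm_traj A b delta alpha omega gamma sel x0 (ext_sample s) K))
  / #|{ffun 'I_K -> bsubset beta}|%:R.

End PASKM.

(* Main.v *)
Require Import Defs.
From HB Require Import structures.
From mathcomp Require Import all_boot all_order all_algebra all_fingroup.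
From mathcomp Require Import all_classical all_reals.
From mathcomp Require Import topology normedtype sequences.
From mathcomp Require Import ring lra.
Import Order.TTheory GRing.Theory Num.Theory numFieldNormedType.Exports.
Set Implicit Arguments. Unset Strict Implicit. Unset Printing Implicit Defensive.
Local Open Scope ring_scope.
Local Open Scope classical_set_scope.
Section Basics.
Variables (R : realType) (m n : nat).
Implicit Types (u w z : 'cV[R]_n).

Definition dot u w : R := \sum_j u j 0 * w j 0.
Definition N2 u : R := dot u u.

Lemma dotC u w : dot u w = dot w u.
Proof. by apply: eq_bigr => j _; rewrite mulrC. Qed.
Lemma dotDr u w z : dot u (w + z) = dot u w + dot u z.
Proof. by rewrite /dot -big_split; apply: eq_bigr => j _; rewrite !mxE mulrDr. Qed.
Lemma dotZr u w (c : R) : dot u (c *: w) = c * dot u w.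
Proof. by rewrite /dot mulr_sumr; apply: eq_bigr => j _; rewrite !mxE mulrCA. Qed.
Lemma dotNr u w : dot u (- w) = - dot u w.
Proof. by rewrite -scaleN1r dotZr mulN1r. Qed.
Lemma dotBr u w z : dot u (w - z) = dot u w - dot u z.
Proof. by rewrite dotDr dotNr. Qed.
Lemma dotDl u w z : dot (w + z) u = dot w u + dot z u.
Proof. by rewrite dotC dotDr !(dotC u). Qed.
Lemma dotZl u w (c : R) : dot (c *: w) u = c * dot w u.
Proof. by rewrite dotC dotZr dotC. Qed.
Lemma dotNl u w : dot (- w) u = - dot w u.
Proof. by rewrite dotC dotNr dotC. Qed.
Lemma dotBl u w z : dot (w - z) u = dot w u - dot z u.
Proof. by rewrite dotDl dotNl. Qed.
Lemma N2_ge0 u : 0 <= N2 u.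
Proof. by apply: sumr_ge0 => j _; rewrite -expr2 sqr_ge0. Qed.
Lemma norm2_N2 u : norm2 u ^+ 2 = N2 u.
Proof.
rewrite /norm2 sqr_sqrtr; last by apply: sumr_ge0 => j _; rewrite sqr_ge0.
by apply: eq_bigr => j _; rewrite expr2.
Qed.
Lemma norm2_ge0 u : 0 <= norm2 u.
Proof. exact: sqrtr_ge0. Qed.

Lemma N2B u w : N2 (u - w) = N2 u - 2 * dot u w + N2 w.
Proof. rewrite /N2 !dotBr !dotBl (dotC w u); ring. Qed.

Lemma N2Z u (c : R) : N2 (c *: u) = c ^+ 2 * N2 u.
Proof. by rewrite /N2 dotZl dotZr mulrA expr2. Qed.

Lemma cs_unit a z : N2 a = 1 -> dot a z ^+ 2 <= N2 z.
Proof.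
move=> ha; have := N2_ge0 (z - dot a z *: a).
rewrite N2B dotZr N2Z ha (dotC z a); lra.
Qed.

Lemma dot_le_norm a z : N2 a = 1 -> dot a z <= norm2 z.
Proof.
move=> ha; have h := cs_unit z ha.

have hz : 0 <= norm2 z by exact: norm2_ge0.
rewrite -norm2_N2 in h.
case: (lerP (dot a z) 0) => hd; first lra.
rewrite !expr2 in h; nra.
Qed.

Lemma arow_dot (A : 'M[R]_(m, n)) i z : (A *m z) i 0 = dot (arow A i) z.
Proof. by rewrite mxE; apply: eq_bigr => j _; rewrite !mxE. Qed.

Lemma N2_arow (A : 'M[R]_(m, n)) i :
  \sum_(j < n) (A i j) ^+ 2 = 1 -> N2 (arow A i) = 1.
Proof. by move=> <-; apply: eq_bigr => j _; rewrite !mxE expr2. Qed.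

End Basics.
Section Dist.
Variables (R : realType) (m n : nat) (A : 'M[R]_(m, n)) (b : 'cV[R]_m).
Hypothesis hP : exists x : 'cV[R]_n, polyhedron A b x.
Hypothesis hA : forall i : 'I_m, \sum_(j < n) (A i j) ^+ 2 = 1.
Implicit Types (z q : 'cV[R]_n).

Let S z := [set norm2 (z - y) | y in polyhedron A b].

Lemma S_ne z : S z !=set0.
Proof. by case: hP => q hq; exists (norm2 (z - q)); exists q. Qed.

Lemma S_lb z : has_lbound (S z).
Proof. by exists 0 => _ [y _ <-]; exact: norm2_ge0. Qed.

Lemma dist_ge0 z : 0 <= distP A b z.
Proof. by apply: lb_le_inf; [exact: S_ne | move=> _ [y _ <-]; exact: norm2_ge0]. Qed.

Lemma dist_le z q : polyhedron A b q -> distP A b z <= norm2 (z - q).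
Proof. by move=> hq; apply: (ge_inf (S_lb z)); exists q. Qed.

Lemma dist_sq_le z q : polyhedron A b q -> distP A b z ^+ 2 <= N2 (z - q).
Proof.
move=> hq; rewrite -norm2_N2; have h1 := dist_le z hq; have h0 := dist_ge0 z.
rewrite !expr2; nra.
Qed.

Lemma dist_approx z eps : 0 < eps ->
  exists q, polyhedron A b q /\ N2 (z - q) <= distP A b z ^+ 2 + eps.
Proof.
move=> he; set d := distP A b z.
have hd0 : 0 <= d := dist_ge0 z.
have hs : d < Num.sqrt (d ^+ 2 + eps).
  have e1 : Num.sqrt (d ^+ 2) = d by rewrite sqrtr_sqr ger0_norm.
  have hp : 0 < d ^+ 2 + eps by rewrite ltr_wpDl // sqr_ge0.
  by rewrite -[X in X < _]e1 ltr_sqrt // ltrDl.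
have [_ [q hq <-] hlt] := inf_lt (S_ne z) hs.
exists q; split => //.
rewrite -norm2_N2.
have h2 : 0 <= d ^+ 2 + eps by rewrite addr_ge0 // ?sqr_ge0 ?ltW.
rewrite -(sqr_sqrtr h2).
have := norm2_ge0 (z - q); move: hlt; set s := Num.sqrt _; rewrite !expr2; nra.
Qed.

Lemma pos_le_dist z i : pos ((A *m z - b) i 0) <= distP A b z.
Proof.
rewrite /pos ge_max dist_ge0 andbT.
apply: lb_le_inf; first exact: S_ne.
move=> _ [q hq <-].
have := dot_le_norm (z - q) (N2_arow (hA i)).
rewrite dotBr -!arow_dot !mxE.
have := hq i; rewrite !mxE => hqi; lra.
Qed.

Lemma poly_conv q1 q2 t : polyhedron A b q1 -> polyhedron A b q2 ->
  0 <= t <= 1 -> polyhedron A b (t *: q1 + (1 - t) *: q2).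
Proof.
move=> h1 h2 /andP[t0 t1] i.
have := h1 i; have := h2 i.
rewrite mulmxDr -!scalemxAr !mxE.
move: (\sum_j _) (\sum_j _) => w u hw hu.
have h3 : t * w <= t * b i 0 by rewrite ler_wpM2l.
have h4 : (1 - t) * u <= (1 - t) * b i 0 by rewrite ler_wpM2l // subr_ge0.
lra.
Qed.

End Dist.
Section Step.
Variables (R : realType) (m n : nat) (A : 'M[R]_(m, n)) (b : 'cV[R]_m).
Hypothesis hP : exists x : 'cV[R]_n, polyhedron A b x.
Hypothesis hA : forall i : 'I_m, \sum_(j < n) (A i j) ^+ 2 = 1.

Lemma N2_comb3 (e f a : 'cV[R]_n) (s1 s2 s3 : R) :
  N2 (s1 *: e + s2 *: f - s3 *: a) =
  s1 ^+ 2 * N2 e + s2 ^+ 2 * N2 f + s3 ^+ 2 * N2 a + 2 * s1 * s2 * dot e f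
  - 2 * s1 * s3 * dot a e - 2 * s2 * s3 * dot a f.
Proof.
rewrite /N2 !(dotDl, dotDr, dotBl, dotBr, dotNl, dotNr, dotZl, dotZr).
rewrite (dotC f e) (dotC e a) (dotC f a); ring.
Qed.

Lemma N2_comb2 (f a : 'cV[R]_n) (s : R) :
  N2 (f - s *: a) = N2 f - 2 * s * dot a f + s ^+ 2 * N2 a.
Proof. rewrite N2B dotZr N2Z (dotC f a); ring. Qed.

Lemma pos_ge0 (t : R) : 0 <= pos t.
Proof. by rewrite /pos le_max lexx orbT. Qed.

Lemma pos_cases (t : R) : (t <= 0 /\ pos t = 0) \/ (0 < t /\ pos t = t).
Proof.
rewrite /pos; case: (leP t 0) => h.
  by left; split => //; apply/max_idPr.
by right; split => //; apply/max_idPl; rewrite ltW.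
Qed.

Lemma pos_ge (t : R) : t <= pos t.
Proof. by rewrite /pos le_max lexx. Qed.

Lemma step_bound (x v y qv qy : 'cV[R]_n) (i : 'I_m) (om gam del c k : R) :
  polyhedron A b qv -> polyhedron A b qy ->
  0 <= om <= 1 -> 0 <= gam -> 0 <= del -> 0 <= k ->
  c = gam * k -> c * (2 * del - del ^+ 2) = gam ^+ 2 ->
  v - y = k *: (y - x) ->
  distP A b (om *: v + (1 - om) *: y - (gam * pos ((A *m y - b) i 0)) *: arow A i) ^+ 2
   + c * distP A b (y - (del * pos ((A *m y - b) i 0)) *: arow A i) ^+ 2
  <= om * N2 (v - qv) + (1 - om + c) * N2 (y - qy)
     - (2 * gam + c * om) * pos ((A *m y - b) i 0) ^+ 2
     + c * om * distP A b x ^+ 2.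
Proof.
move=> hqv hqy /andP[om0 om1] gam0 del0 k0 hc heq hvy.
set r := pos _; set a := arow A i.
have hNa : N2 a = 1 by exact: N2_arow.
have r0 : 0 <= r by exact: pos_ge0.
set s := pos ((A *m x - b) i 0).
have s0 : 0 <= s by exact: pos_ge0.
have sD : s <= distP A b x by exact: pos_le_dist.
have D0 : 0 <= distP A b x by exact: dist_ge0.
set D := distP A b x in sD D0 *.
set e := v - qv; set f := y - qy.
have c0 : 0 <= c by rewrite hc mulr_ge0.
set q := om *: qv + (1 - om) *: qy.
have hq : polyhedron A b q by apply: poly_conv => //; rewrite om0 om1.
have ev : om *: v + (1 - om) *: y - (gam * r) *: a - q
          = om *: e + (1 - om) *: f - (gam * r) *: a.
  by apply/matrixP => j l; rewrite /q /e /f !mxE; ring.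
have h1 := dist_sq_le hP (om *: v + (1 - om) *: y - (gam * r) *: a) hq.
rewrite ev N2_comb3 hNa in h1.
have ex : y - (del * r) *: a - qy = f - (del * r) *: a.
  by apply/matrixP => j l; rewrite /f !mxE; ring.
have h2 := dist_sq_le hP (y - (del * r) *: a) hqy.
rewrite ex N2_comb2 hNa in h2.
have F1 : 2 * dot e f <= N2 e + N2 f.
  by have := N2_ge0 (e - f); rewrite N2B; lra.
have ay : (A *m y - b) i 0 = dot a y - b i 0 by rewrite /a -arow_dot !mxE.
have axb' : dot a x - b i 0 <= s.
  by apply: le_trans (pos_ge _); rewrite /a -arow_dot !mxE.
have haf : dot a f >= dot a y - b i 0.
  by have := hqy i; rewrite arow_dot /f dotBr; lra.
have hae : dot a e >= dot a v - b i 0.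
  by have := hqv i; rewrite arow_dot /e dotBr; lra.
have hav : dot a v = dot a y + k * (dot a y - dot a x).
  by have := congr1 (dot a) hvy; rewrite dotBr dotZr dotBr; lra.
have F2 : r * dot a f >= r ^+ 2.
  rewrite /r ay; case: (pos_cases (dot a y - b i 0)) => [[_ ->]|[hp ->]].
    by rewrite mul0r expr2 mul0r.
  by rewrite expr2 ler_wpM2l // ltW.
have F3 : r * dot a e >= r ^+ 2 + k * (r ^+ 2 - r * s).
  rewrite /r ay; case: (pos_cases (dot a y - b i 0)) => [[_ ->]|[hp ->]].
    by rewrite mul0r expr2 !mul0r subrr mulr0 addr0.
  have h3 : dot a e >= (dot a y - b i 0) + k * ((dot a y - b i 0) - s).
    have : k * (dot a y - dot a x) >= k * ((dot a y - b i 0) - s).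
      by rewrite ler_wpM2l //; lra.
    move: (k * (dot a y - dot a x)) hav => kk hav.
    lra.
  have := ler_wpM2l (ltW hp) h3; rewrite !expr2; lra.
have G1 : om * (1 - om) * (2 * dot e f) <= om * (1 - om) * (N2 e + N2 f).
  by rewrite ler_wpM2l // mulr_ge0 // subr_ge0.
have G2 : om * gam * (r * dot a e) >= om * gam * (r ^+ 2 + k * (r ^+ 2 - r * s)).
  by rewrite ler_wpM2l // mulr_ge0.
have G3 : (1 - om) * gam * (r * dot a f) >= (1 - om) * gam * r ^+ 2.
  by rewrite ler_wpM2l // mulr_ge0 // subr_ge0.
have G4 : c * del * (r * dot a f) >= c * del * r ^+ 2.
  by rewrite ler_wpM2l // mulr_ge0.
have G5 : c * om * (2 * (r * s)) <= c * om * (r ^+ 2 + D ^+ 2).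
  rewrite ler_wpM2l ?mulr_ge0 //.
  have : s ^+ 2 <= D ^+ 2 by rewrite !expr2; nra.
  have := sqr_ge0 (r - s); rewrite !expr2; lra.
have E1 : om * gam * k = om * c by rewrite hc mulrA.
have E2 : c * del ^+ 2 * r ^+ 2 = (2 * c * del - gam ^+ 2) * r ^+ 2.
  by rewrite -heq; ring.
have h2' : c * distP A b (y - (del * r) *: a) ^+ 2 <=
           c * (N2 f - 2 * (del * r) * dot a f + (del * r) ^+ 2 * 1).
  by rewrite ler_wpM2l.
move: h1 h2' G1 G2 G3 G4 G5 E1 E2.
rewrite !exprMn.
move: (distP A b _) (distP A b _) (dot a f) (dot a e) (dot e f) (N2 e) (N2 f).
move=> d1 d2 af ae ef Ne Nf.
rewrite !expr2 => *.
nra.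
Qed.

End Step.
Section Avg.
Variables (R : realType) (m beta : nat).
Hypothesis hb : (1 <= beta <= m)%N.
Local Notation B := (bsubset m beta).

Lemma card_pB (p : {perm 'I_m}) (t : B) : #|p @: val t| == beta.
Proof. by rewrite card_imset; [exact: (valP t) | exact: perm_inj]. Qed.

Definition pB (p : {perm 'I_m}) (t : B) : B := @exist _ (fun tau : {set 'I_m} => #|tau| == beta) (p @: val t) (card_pB p t).

Lemma pB_inj p : injective (pB p).
Proof.
move=> t1 t2 /(congr1 val) /= h; apply: val_inj.
exact: (imset_inj (@perm_inj _ p)).
Qed.

Definition cnt (i : 'I_m) : R := \sum_(t : B) ((i \in val t) : nat)%:R.

Lemma cnt_sym i j : cnt i = cnt j.
Proof.
rewrite /cnt (reindex_inj (pB_inj (p := tperm i j))) /=.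
apply: eq_bigr => t _.
by rewrite -{1}(tpermR i j) mem_imset //; exact: perm_inj.
Qed.

Lemma sum_mem (t : {set 'I_m}) : \sum_i (((i \in t) : nat)%:R : R) = #|t|%:R.
Proof.
rewrite -natr_sum -sum1_card [in RHS]big_mkcond /=; congr _%:R.
Qed.

Lemma sum_cnt : \sum_i cnt i = (#|{: B}| * beta)%:R.
Proof.
rewrite /cnt exchange_big /=.
rewrite (eq_bigr (fun _ => (beta%:R : R))); last first.
  by move=> t _; rewrite sum_mem (eqP (valP t)).
by rewrite sumr_const natrM mulrC mulr_natr.
Qed.

Lemma m_cnt i : m%:R * cnt i = (#|{: B}| * beta)%:R.
Proof.
rewrite -sum_cnt (eq_bigr (fun _ => cnt i)); last by move=> j _; exact: cnt_sym.
by rewrite sumr_const card_ord mulr_natl.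
Qed.

Lemma avg_bound (g : 'I_m -> R) (h : {set 'I_m} -> R) :
  (forall tau : {set 'I_m}, #|tau| = beta -> forall i, i \in tau -> g i <= h tau) ->
  #|{: B}|%:R * \sum_i g i <= m%:R * \sum_(t : B) h (val t).
Proof.
move=> hgh.
have hbeta : (0 < beta%:R :> R) by rewrite ltr0n; case/andP: hb.
have step : \sum_i g i * cnt i <= beta%:R * \sum_(t : B) h (val t).
  rewrite /cnt.
  under eq_bigr do rewrite mulr_sumr.
  rewrite exchange_big /= mulr_sumr; apply: ler_sum => t _.
  have ht : #|val t| = beta by apply/eqP; exact: (valP t).
  have -> : \sum_i g i * ((i \in val t) : nat)%:R = \sum_(i in val t) g i.
    by rewrite [RHS]big_mkcond /=; apply: eq_bigr => i _; case: (i \in _); rewrite ?mulr1 ?mulr0.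
  apply: le_trans (ler_sum _ (fun i hi => hgh _ ht i hi)) _.
  by rewrite sumr_const ht mulr_natl.
have : m%:R * \sum_i g i * cnt i = (#|{: B}| * beta)%:R * \sum_i g i.
  rewrite mulr_sumr mulr_sumr; apply: eq_bigr => i _.
  by rewrite -(m_cnt i); ring.
move=> heq.
have h1 := ler_wpM2l (ler0n _ m) step.
rewrite heq natrM in h1.
rewrite -(ler_pM2l hbeta).
move: h1; move: (\sum_i g i) (\sum_(t : B) h (val t)) => X Y.
move=> h1; lra.
Qed.

End Avg.
Section Expect.
Variables (R : realType) (m n : nat) (A : 'M[R]_(m, n)) (b : 'cV[R]_m)
  (beta : nat) (delta alpha omega gamma : R)
  (sel : nat -> {set 'I_m} -> 'cV[R]_n -> 'I_m) (x0 : 'cV[R]_n).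
Local Notation B := (bsubset m beta).
Local Notation traj := (paskm_traj A b delta alpha omega gamma sel x0).
Local Notation step := (paskm_step A b delta alpha omega gamma sel).
Local Notation E := (paskm_E A b beta delta alpha omega gamma sel x0).

Lemma traj_ext (s1 s2 : nat -> {set 'I_m}) K :
  (forall j, (j < K)%N -> s1 j = s2 j) -> traj s1 K = traj s2 K.
Proof.
elim: K => [//|K IH] h /=.
rewrite IH; last by move=> j hj; apply: h; rewrite ltnS ltnW.
by rewrite h.
Qed.

Definition hcat K (p : {ffun 'I_K -> B} * B) : {ffun 'I_K.+1 -> B} :=
  [ffun j => if unlift ord_max j is Some j' then p.1 j' else p.2].
Definition hsplit K (s : {ffun 'I_K.+1 -> B}) : {ffun 'I_K -> B} * B :=
  ([ffun j => s (lift ord_max j)], s ord_max).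

Lemma hcatK K : cancel (@hcat K) (@hsplit K).
Proof.
move=> [s t]; rewrite /hsplit /hcat; congr (_, _).
  by apply/ffunP => j; rewrite !ffunE liftK.
by rewrite ffunE unlift_none.
Qed.

Lemma hsplitK K : cancel (@hsplit K) (@hcat K).
Proof.
move=> s; apply/ffunP => j; rewrite /hsplit /hcat ffunE.
by case: unliftP => [j' ->|->] /=; rewrite ?ffunE.
Qed.

Lemma ext_hcat_lt K (p : {ffun 'I_K -> B} * B) j : (j < K)%N ->
  ext_sample (hcat p) j = ext_sample p.1 j.
Proof.
move=> hj; have hj1 : (j < K.+1)%N by rewrite ltnS ltnW.
rewrite /ext_sample (insubT (fun j => j < K.+1)%N hj1) (insubT (fun j => j < K)%N hj).
rewrite /hcat ffunE.
have -> : (Sub j hj1 : 'I_K.+1) = lift ord_max (Sub j hj : 'I_K).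
  by apply: val_inj; rewrite /= /bump leqNgt hj.
by rewrite liftK.
Qed.

Lemma ext_hcat_K K (p : {ffun 'I_K -> B} * B) :
  ext_sample (hcat p) K = val p.2.
Proof.
have hj1 : (K < K.+1)%N by [].
rewrite /ext_sample (insubT (fun j => j < K.+1)%N hj1) /hcat ffunE.
have -> : (Sub K hj1 : 'I_K.+1) = ord_max by apply: val_inj.
by rewrite unlift_none.
Qed.

Lemma sum_succ K (f : 'cV[R]_n * 'cV[R]_n -> R) :
  \sum_(s : {ffun 'I_K.+1 -> B}) f (traj (ext_sample s) K.+1) =
  \sum_(s : {ffun 'I_K -> B}) \sum_(t : B) f (step K (val t) (traj (ext_sample s) K)).
Proof.
rewrite (reindex (@hcat K)); last by exists (@hsplit K) => x _; [exact: hcatK | exact: hsplitK].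
rewrite pair_bigA; apply: eq_bigr => -[s t] _ /=.
rewrite ext_hcat_K; congr (f (step _ _ _)).
by apply: traj_ext => j hj; rewrite ext_hcat_lt.
Qed.

Lemma cardF K : #|{: {ffun 'I_K -> B}}| = (#|{: B}| ^ K)%N.
Proof. by rewrite card_ffun card_ord. Qed.

Lemma E_def K f : E K f =
  (\sum_(s : {ffun 'I_K -> B}) f (traj (ext_sample s) K)) / (#|{: B}| ^ K)%:R.
Proof. by rewrite /paskm_E cardF. Qed.

Lemma E0 f : E 0 f = f (x0, x0).
Proof.
rewrite E_def expn0 divr1 /=.
rewrite (big_pred1 (@ffun0 _ (fun=> B) (card_ord 0))) //.
by move=> s; apply/esym/eqP/ffunP => -[j hj]; exfalso; by rewrite ltn0 in hj.
Qed.

Lemma E_le K f g : (forall st, f st <= g st) -> E K f <= E K g.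
Proof.
move=> h; rewrite !E_def ler_wpM2r ?invr_ge0 ?ler0n //.
by apply: ler_sum => s _; apply: h.
Qed.

Lemma E_scale K c f : E K (fun st => c * f st) = c * E K f.
Proof. by rewrite !E_def -mulr_sumr mulrA. Qed.

Lemma E_step K f g w : (0 < #|{: B}|)%N ->
  (forall st, \sum_(t : B) f (step K (val t) st) <= #|{: B}|%:R * (w * g st)) ->
  E K.+1 f <= w * E K g.
Proof.
move=> hN h; rewrite !E_def sum_succ.
have hN' : (0 : R) < #|{: B}|%:R by rewrite ltr0n.
have hK : (0 : R) < (#|{: B}| ^ K)%:R by rewrite ltr0n expn_gt0 hN.
rewrite expnSr natrM.
set G := \sum_(s : {ffun 'I_K -> B}) g (traj (ext_sample s) K).
set N := (#|{: B}|)%:R; set NK := ((#|{: B}| ^ K)%N)%:R.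
have h1 : \sum_(s : {ffun 'I_K -> B}) \sum_(t : B) f (step K (val t) (traj (ext_sample s) K))
          <= N * (w * G).
  rewrite /G mulr_sumr mulr_sumr; apply: ler_sum => s _; exact: h.
have hpos : 0 < NK * N by rewrite mulr_gt0.
apply: le_trans (_ : N * (w * G) / (NK * N) <= _).
  by rewrite ler_wpM2r // invr_ge0 ltW.
rewrite le_eqVlt; apply/orP; left; apply/eqP.
field; rewrite /N /NK; apply/andP; split; rewrite gt_eqF //.
Qed.

End Expect.
Lemma le_eps (R : realType) (x y K : R) : 0 <= K ->
  (forall e, 0 < e -> x <= y + K * e) -> x <= y.
Proof.
move=> K0 h; apply/ler_addgt0Pr => e he.
have hK1 : 0 < K + 1 by rewrite ltr_wpDl.
have := h (e / (K + 1)) (divr_gt0 he hK1).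
have : K * (e / (K + 1)) <= e.
  rewrite mulrA ler_pdivrMr // mulrDr mulr1; lra.
lra.
Qed.

Section State.
Variables (R : realType) (m n : nat) (A : 'M[R]_(m, n)) (b : 'cV[R]_m).
Hypothesis hP : exists x : 'cV[R]_n, polyhedron A b x.
Hypothesis hA : forall i : 'I_m, \sum_(j < n) (A i j) ^+ 2 = 1.
Variables (beta : nat) (sel : nat -> {set 'I_m} -> 'cV[R]_n -> 'I_m).
Hypothesis hb : (1 <= beta <= m)%N.
Hypothesis hsel : forall k (tau : {set 'I_m}) (y : 'cV[R]_n), #|tau| = beta ->
     sel k tau y \in tau /\
     forall i, i \in tau ->
       pos ((A *m y - b) i 0) <= pos ((A *m y - b) (sel k tau y) 0).
Variables (om gam del c k al mu : R).
Hypotheses (om0 : 0 <= om) (om1 : om <= 1) (gam0 : 0 <= gam) (del0 : 0 <= del)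
  (k0 : 0 <= k) (hc : c = gam * k) (heq : c * (2 * del - del ^+ 2) = gam ^+ 2)
  (hal : 1 - al = k * al) (mu0 : 0 <= mu)
  (hcoef : 1 - om + c = (2 * gam + c * om) * mu)
  (hoff : forall z, mu * m%:R * distP A b z ^+ 2 <= posres2 A b z).
Local Notation B := (bsubset m beta).
Local Notation d := (distP A b).

Lemma state_bound K (x v : 'cV[R]_n) :
  \sum_(t : B) (d (paskm_step A b del al om gam sel K (val t) (x, v)).2 ^+ 2 +
                c * d (paskm_step A b del al om gam sel K (val t) (x, v)).1 ^+ 2)
  <= #|{: B}|%:R * (om * (d v ^+ 2 + c * d x ^+ 2)).
Proof.
rewrite /paskm_step /=.
set y := al *: v + (1 - al) *: x.
have hvy : v - y = k *: (y - x).
  apply/matrixP => i j; rewrite /y !mxE.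
  transitivity ((1 - al) * (v i j - x i j)); first by ring.
  by rewrite {1}hal; ring.
set N := #|{: B}|%:R.
have N0 : 0 <= N by exact: ler0n.
have c0 : 0 <= c by rewrite hc mulr_ge0.
have hm : (0 : R) < m%:R by rewrite ltr0n; case/andP: hb => h1 h2; apply: leq_trans h2.
apply: (@le_eps _ _ _ (N * (1 + c))); first by rewrite mulr_ge0 // addr_ge0.
move=> e he.
have [qv [hqv ev]] := dist_approx hP v he.
have [qy [hqy ey]] := dist_approx hP y he.
set r := fun t : B => pos ((A *m y - b) (sel K (val t) y) 0).
set C0 := om * N2 (v - qv) + (1 - om + c) * N2 (y - qy) + c * om * d x ^+ 2.
have h1 : forall t : B,
  d (om *: v + (1 - om) *: y - (gam * r t) *: arow A (sel K (val t) y)) ^+ 2 +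
  c * d (y - (del * r t) *: arow A (sel K (val t) y)) ^+ 2
  <= C0 - (2 * gam + c * om) * r t ^+ 2.
  move=> t; have := step_bound hP hA (sel K (val t) y) hqv hqy
     (introT andP (conj om0 om1)) gam0 del0 k0 hc heq hvy.
  by rewrite /C0 /r; lra.
apply: le_trans (ler_sum _ (fun t _ => h1 t)) _.
rewrite sumrB -mulr_sumr.
have -> : \sum_(t : B) C0 = C0 * N by rewrite sumr_const -mulr_natr.
set S := \sum_(t : B) r t ^+ 2.
have hS : N * posres2 A b y <= m%:R * S.
  apply: (avg_bound hb (g := fun i => pos ((A *m y - b) i 0) ^+ 2)
                      (h := fun tau => pos ((A *m y - b) (sel K tau y) 0) ^+ 2)).
  move=> tau htau i hi; have [_ hmax] := hsel K y htau.
  have := hmax i hi; have := pos_ge0 ((A *m y - b) i 0).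
  move: (pos _) (pos _) => p1 p2 hp1 hp12; rewrite !expr2; nra.
have hH := hoff y.
have hS2 : N * (mu * d y ^+ 2) <= S.
  have : m%:R * (N * (mu * d y ^+ 2)) <= m%:R * S.
    apply: le_trans hS; rewrite mulrCA; apply: ler_wpM2l => //.
    by rewrite mulrA (mulrC m%:R).
  by rewrite ler_pM2l.
have hS3 : (2 * gam + c * om) * (N * (mu * d y ^+ 2)) <= (2 * gam + c * om) * S.
  by rewrite ler_wpM2l // addr_ge0 ?mulr_ge0.
have hev : N * (om * N2 (v - qv)) <= N * (om * (d v ^+ 2 + e)).
  by rewrite ler_wpM2l // ler_wpM2l.
have hey : N * ((1 - om + c) * N2 (y - qy)) <= N * ((1 - om + c) * (d y ^+ 2 + e)).
  by rewrite ler_wpM2l // ler_wpM2l // addr_ge0 // subr_ge0.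
have hco : (2 * gam + c * om) * (N * (mu * d y ^+ 2)) = N * ((1 - om + c) * d y ^+ 2).
  by rewrite hcoef; ring.
rewrite /C0.
lra.
Qed.

End State.
Lemma squeeze_geo (R : realType) (u : nat -> R) (C w : R) :
  0 <= w -> w < 1 -> (forall k, 0 <= u k <= C * w ^+ k) -> u @ \oo --> (0 : R).
Proof.
move=> w0 w1 hu.
apply: (@squeeze_cvgr _ _ _ _ (fun=> 0) (geometric C w)).
- by apply: nearW => k; rewrite /geometric /=; exact: hu.
- exact: cvg_cst.
- by apply: cvg_geometric; rewrite ger0_norm.
Qed.
Theorem theorem8 (R : realType) (m n : nat)
  (A : 'M[R]_(m, n)) (b : 'cV[R]_m) (beta : nat) (L : R)
  (delta zeta : R) (x0 : 'cV[R]_n)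
  (sel : nat -> {set 'I_m} -> 'cV[R]_n -> 'I_m) :
  (forall i : 'I_m, \sum_(j < n) (A i j) ^+ 2 = 1) ->
  (exists x : 'cV[R]_n, polyhedron A b x) ->
  (1 <= beta <= m)%N ->
  0 < L ->
  (forall x : 'cV[R]_n, distP A b x ^+ 2 <= L ^+ 2 * posres2 A b x) ->
  (* i*_k is a maximizer of (a_i^T y - b_i)^+ over tau_k *)
  (forall k (tau : {set 'I_m}) (y : 'cV[R]_n), #|tau| = beta ->
     sel k tau y \in tau /\
     forall i, i \in tau ->
       pos ((A *m y - b) i 0) <= pos ((A *m y - b) (sel k tau y) 0)) ->
  0 < delta < 2 ->
  let mu1 := (m%:R * L ^+ 2)^-1 in
  let eta := 2 * delta - delta ^+ 2 in
  0 < zeta ->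
  (mu1 < 1 -> zeta < 4 * eta * mu1 / (1 - mu1) ^+ 2) ->
  let gamma := Num.sqrt (zeta * eta * mu1) in
  let alpha := eta / (eta + gamma) in
  let omega := 1 - (zeta * mu1 ^+ 2 + 2 * gamma * mu1 - zeta * mu1)
                   / (1 + zeta * mu1 ^+ 2) in
  let E := paskm_E A b beta delta alpha omega gamma sel x0 in
  let d := distP A b in
  (* linear rate omega < 1 *)
  omega < 1 /\
  (* convergence: E d(x_k,P)^2 -> 0 and E d(v_k,P)^2 -> 0 *)
  (fun k => E k (fun st => d st.1 ^+ 2)) @ \oo --> (0 : R) /\
  (fun k => E k (fun st => d st.2 ^+ 2)) @ \oo --> (0 : R) /\
  (forall k : nat,
     E k.+1 (fun st => d st.2 ^+ 2 + zeta * mu1 * d st.1 ^+ 2)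
       <= omega ^+ k.+1 * E 0%N (fun st => d st.2 ^+ 2 + zeta * mu1 * d st.1 ^+ 2)) /\
  E 0%N (fun st => d st.2 ^+ 2 + zeta * mu1 * d st.1 ^+ 2)
    = (1 + zeta * mu1) * d x0 ^+ 2.
Proof.
move=> hA hP hb L0 hoffL hsel /andP[d0 d2] mu1 eta z0 hzc gamma alpha omega E d.
have hm : (0 < m)%N by case/andP: hb => h1 h2; apply: leq_trans h2.
have mR : (0 : R) < m%:R by rewrite ltr0n.
have L2 : 0 < L ^+ 2 by rewrite exprn_gt0.
have mu0 : 0 < mu1 by rewrite /mu1 invr_gt0 mulr_gt0.
have eta0 : 0 < eta by rewrite /eta; nra.
have eta1 : eta <= 1 by rewrite /eta; have := sqr_ge0 (delta - 1); rewrite !expr2; nra.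
have zem0 : 0 <= zeta * eta * mu1 by rewrite !mulr_ge0 // ltW.
have gam2 : gamma ^+ 2 = zeta * eta * mu1 by rewrite /gamma sqr_sqrtr.
have gam0 : 0 < gamma by rewrite /gamma sqrtr_gt0 !mulr_gt0.
have mu1le : mu1 <= 1.
  case: hP => p hp.
  pose i0 : 'I_m := Ordinal hm.
  pose t := `|b i0 0 - (A *m p) i0 0| + 1.
  pose x := p + t *: arow A i0.
  have hx : 1 <= pos ((A *m x - b) i0 0).
    apply: le_trans (pos_ge _) .
    have resid : forall z i, (A *m z - b) i 0 = dot (arow A i) z - b i 0.
      by move=> z i; rewrite -arow_dot !mxE.
    have hN := N2_arow (hA i0); rewrite /N2 in hN.
    rewrite resid /x dotDr dotZr hN -arow_dot.
    have := ler_norm (b i0 0 - (A *m p) i0 0); rewrite /t; lra.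
  have hdx : 1 <= d x by apply: le_trans hx (pos_le_dist _ hA _ _); exists p.
  have hpr : posres2 A b x <= m%:R * d x ^+ 2.
    have -> : m%:R * d x ^+ 2 = \sum_(i < m) d x ^+ 2.
      by rewrite sumr_const card_ord mulr_natl.
    rewrite /posres2.
    apply: ler_sum => i _.
    have h1 := pos_ge0 ((A *m x - b) i 0).
    have h2 : pos ((A *m x - b) i 0) <= d x by apply: pos_le_dist => //; exists p.
    rewrite !expr2; nra.
  have := hoffL x.
  have hd2 : 1 <= d x ^+ 2 by rewrite expr2; nra.
  move=> hh.
  have : 1 <= L ^+ 2 * m%:R.
    have : d x ^+ 2 <= L ^+ 2 * m%:R * d x ^+ 2.
      apply: le_trans hh _; rewrite -mulrA ler_wpM2l // ltW //.
    move: (d x ^+ 2) hd2 => D hD h; nra.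
  move=> h1; rewrite /mu1 invf_le1 ?mulr_gt0 //; lra.
have den0 : 0 < 1 + zeta * mu1 ^+ 2 by rewrite ltr_wpDr // mulr_ge0 ?sqr_ge0 ?ltW.
have omlt1 : omega < 1.
  rewrite /omega gtrBl divr_gt0 //.
  case: (ltrP mu1 1) => hmu.
    have hz := hzc hmu.
    have h1m : 0 < (1 - mu1) ^+ 2 by rewrite exprn_gt0 // subr_gt0.
    have : zeta * (1 - mu1) ^+ 2 < 4 * eta * mu1.
      by move: hz; rewrite ltr_pdivlMr.
    move=> hz2.
    have hz3 : (zeta * (1 - mu1)) ^+ 2 < (2 * gamma) ^+ 2.
      have e1 : (2 * gamma) ^+ 2 = zeta * (4 * eta * mu1) by rewrite exprMn gam2; ring.
      have e2 : (zeta * (1 - mu1)) ^+ 2 = zeta * (zeta * (1 - mu1) ^+ 2) by ring.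
      by rewrite e1 e2 ltr_pM2l.
    have hz4 : zeta * (1 - mu1) < 2 * gamma.
      move: hz3; rewrite !expr2 => hz3; nra.
    have hh : 0 < 2 * gamma - zeta * (1 - mu1) by rewrite subr_gt0.
    have := mulr_gt0 mu0 hh; lra.
  have hmu1 : 0 <= mu1 - 1 by rewrite subr_ge0.
  have := mulr_ge0 (mulr_ge0 (ltW z0) (ltW mu0)) hmu1.
  have := mulr_gt0 gam0 mu0; lra.
have om0 : 0 <= omega.
  rewrite /omega subr_ge0 ler_pdivrMr // mul1r.
  have : gamma ^+ 2 <= zeta * mu1.
    by rewrite gam2; have := ler_wpM2l (mulr_ge0 (ltW z0) (ltW mu0)) eta1; lra.
  have := sqr_ge0 (1 - gamma); rewrite !expr2 => *; nra.
set c := zeta * mu1.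
set k := gamma / eta.
have c0 : 0 <= c by rewrite mulr_ge0 // ltW.
have hc : c = gamma * k.
  by rewrite /k mulrA -expr2 gam2 /c; field; rewrite gt_eqF.
have heq : c * (2 * delta - delta ^+ 2) = gamma ^+ 2.
  by rewrite gam2 /c /eta; ring.
have hal : 1 - alpha = k * alpha.
  by rewrite /alpha /k; field; rewrite !gt_eqF // addr_gt0.
have hcoef : 1 - omega + c = (2 * gamma + c * omega) * mu1.
  by rewrite /omega /c; field; rewrite gt_eqF.
have hoff : forall z, mu1 * m%:R * d z ^+ 2 <= posres2 A b z.
  move=> z; have := hoffL z.
  have e : mu1 * m%:R = (L ^+ 2)^-1.
    by rewrite /mu1; field; rewrite !gt_eqF.
  move=> h; rewrite e.
  have hi : 0 <= (L ^+ 2)^-1 by rewrite invr_ge0 ltW.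
  apply: le_trans (ler_wpM2l hi h) _.
  by rewrite mulrA mulVf ?gt_eqF // mul1r.
have hN : (0 < #|{: bsubset m beta}|)%N.
  have : (0 < #|[set T : {set 'I_m} | #|T| == beta]%SET|)%N.
    by rewrite card_draws card_ord bin_gt0; case/andP: hb.
  case/card_gt0P => tau; rewrite inE => htau.
  by apply/card_gt0P; exists (exist _ tau htau).
pose Phi := fun st : 'cV[R]_n * 'cV[R]_n => d st.2 ^+ 2 + zeta * mu1 * d st.1 ^+ 2.
have Estep : forall K, E K.+1 Phi <= omega * E K Phi.
  move=> K; apply: E_step => // -[x v]; rewrite /Phi /=.
  exact: (state_bound hP hA hb hsel om0 (ltW omlt1) (ltW gam0) (ltW d0)
            (divr_ge0 (ltW gam0) (ltW eta0)) hc heq hal hcoef hoff).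
have Erate : forall K, E K Phi <= omega ^+ K * E 0%N Phi.
  elim=> [|K IH]; first by rewrite expr0 mul1r.
  apply: le_trans (Estep K) _.
  by rewrite exprS -mulrA ler_wpM2l.
have E00 : E 0%N Phi = (1 + zeta * mu1) * d x0 ^+ 2.
  by rewrite /E E0 /Phi /=; ring.
have dge0 : forall z, 0 <= d z by move=> z; exact: dist_ge0.
split => //.
split.
  apply: (squeeze_geo (C := E 0%N Phi / c) om0 omlt1) => K.
  apply/andP; split.
    have := E_le A b beta delta alpha omega gamma sel x0 K
      (f := fun st => 0 * d st.1 ^+ 2) (g := fun st => d st.1 ^+ 2).
    rewrite E_scale mul0r; apply => st; rewrite mul0r sqr_ge0 //.
  have h1 : E K (fun st => c * d st.1 ^+ 2) <= E K Phi.
    by apply: E_le => st; rewrite /Phi ler_wpDl // sqr_ge0.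
  rewrite /E E_scale in h1.
  have cpos : 0 < c by rewrite mulr_gt0.
  rewrite mulrAC ler_pdivlMr //.
  rewrite mulrC; apply: le_trans h1 _; rewrite mulrC; exact: Erate.
split.
  apply: (squeeze_geo (C := E 0%N Phi) om0 omlt1) => K.
  apply/andP; split.
    have := E_le A b beta delta alpha omega gamma sel x0 K
      (f := fun st => 0 * d st.2 ^+ 2) (g := fun st => d st.2 ^+ 2).
    rewrite E_scale mul0r; apply => st; rewrite mul0r sqr_ge0 //.
  have h1 : E K (fun st => d st.2 ^+ 2) <= E K Phi.
    by apply: E_le => st; rewrite /Phi ler_wpDr // mulr_ge0 // sqr_ge0.
  apply: le_trans h1 _; rewrite mulrC; exact: Erate.
split; last exact: E00.
move=> K; exact: Erate.
Qed.
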